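(* Let $\varphi\in\Phi_w(\Omega)$ and $f\in L^2(\Omega)$. Let $u\in L^2(\Omega)$, let $(u_i)\subset L^2(\Omega)$ converge to $u$ in $L^2(\Omega)$ and let $p_i\to1^+$. Then $F(u)\le\liminf_{i\to\infty}F_{p_i}(u_i)$.
   Context: $\Omega\subset\mathbb{R}^n$ is a bounded domain. A function $g$ on $(0,\infty)$ is $L$-almost increasing ($L\ge1$) if $g(s)\le Lg(t)$ whenever $0<s\le t$. A weak $\Phi$-function, $\varphi\in\Phi_w(\Omega)$, is $\varphi:\Omega\times[0,\infty)\to[0,\infty]$ such that for a.e. $x\in\Omega$: for every measurable $h:\Omega\to\mathbb{R}$, $y\mapsto\varphi(y,h(y))$ is measurable; $t\mapsto\varphi(x,t)$ is non-decreasing; $\varphi(x,0)=\lim_{t\to0^+}\varphi(x,t)=0$, $\lim_{t\to\infty}\varphi(x,t)=\infty$; $t\mapsto\varphi(x,t)/t$ is $L$-almost increasing on $(0,\infty)$ with $L$ independent of $x$. $\varphi^p(x,t):=\varphi(x,t)^p$. $\varrho_\varphi(u)=\int_\Omega\varphi(x,|u|)\,dx$; $\|u\|_\varphi=\inf\{\lambda>0:\varrho_\varphi(u/\lambda)\le1\}$, $\|v\|_\varphi=\||v|\|_\varphi$ for vector fields. $L^{1,\varphi}(\Omega)=\{u\in W^{1,1}(\Omega):\|u\|_{L^1(\Omega)}+\|\nabla u\|_\varphi<\infty\}$. For $p>1$, $F_p:L^2(\Omega)\to[0,\infty]$, $F_p(u)=\int_\Omega\varphi(x,|\nabla u|)^p+|u-f|^2\,dx$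 if $u\in L^{1,\varphi^p}(\Omega)\cap L^2(\Omega)$ and $+\infty$ otherwise; $F(u)=\inf\{\liminf_{i\to\infty}\int_\Omega\varphi(x,|\nabla v_i|)+|v_i-f|^2\,dx: v_i\in L^{1,\varphi}(\Omega)\cap L^2(\Omega),\ v_i\to u\text{ in }L^2(\Omega)\}$. *)

(* Defs.v *)
From HB Require Import structures.
From mathcomp Require Import all_boot all_order all_algebra.
From mathcomp Require Import all_classical all_reals all_analysis.
From mathcomp Require Import measurable_realfun.
Set Implicit Arguments. Unset Strict Implicit. Unset Printing Implicit Defensive.
Import Order.TTheory GRing.Theory Num.Theory.
Import numFieldNormedType.Exports.
Local Open Scope classical_set_scope.
Local Open Scope ring_scope.

Definition Rn (R : realType) (n : nat) :=
  g_sigma_algebraType (@open 'rV[R]_n).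

(* mu is Lebesgue measure on the Borel sets of R^n: it gives closed boxes
   their volume (this determines it uniquely on Borel sets). *)
Definition lebesgue_rV (R : realType) (n : nat)
  (mu : {measure set (Rn R n) -> \bar R}) : Prop :=
  forall a b : 'rV[R]_n, (forall i, a 0 i <= b 0 i) ->
    mu [set x : Rn R n | forall i, a 0 i <= (x : 'rV[R]_n) 0 i <= b 0 i]
    = (\prod_(i < n) (b 0 i - a 0 i))%:E.

Definition enorm (R : realType) (n : nat) (v : 'rV[R]_n) : R :=
  Num.sqrt (\sum_(j < n) v 0 j ^+ 2).

Definition eunit (R : realType) (n : nat) (j : 'I_n) : 'rV[R]_n := delta_mx 0 j.

Fixpoint iterD (R : realType) (n : nat) (vs : seq 'rV[R]_n)
  (f : 'rV[R]_n -> R) : 'rV[R]_n -> R :=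
  match vs with
  | [::] => f
  | v :: vs' => 'D_v (iterD vs' f)
  end.

Definition smooth (R : realType) (n : nat) (f : 'rV[R]_n -> R) : Prop :=
  (forall (vs : seq 'rV[R]_n) (v x : 'rV[R]_n), derivable (iterD vs f) x v) /\
  (forall vs : seq 'rV[R]_n, continuous (iterD vs f)).

Definition test_fun (R : realType) (n : nat) (Om : set 'rV[R]_n)
  (psi : 'rV[R]_n -> R) : Prop :=
  smooth psi /\ compact (closure [set x | psi x != 0]) /\
  closure [set x | psi x != 0] `<=` Om.

Definition weak_grad (R : realType) (n : nat)
  (mu : {measure set (Rn R n) -> \bar R}) (Om : set (Rn R n))
  (u : Rn R n -> R) (g : Rn R n -> 'rV[R]_n) : Prop :=
  (forall j : 'I_n, mu.-integrable Om (fun x => (g x 0 j)%:E)) /\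
  (forall (psi : 'rV[R]_n -> R) (j : 'I_n), test_fun (Om : set 'rV[R]_n) psi ->
    (\int[mu]_(x in Om) (u x * 'D_(@eunit R n j) psi x)%:E =
     - \int[mu]_(x in Om) (g x 0 j * psi x)%:E)%E).

Definition W11_grad (R : realType) (n : nat)
  (mu : {measure set (Rn R n) -> \bar R}) (Om : set (Rn R n))
  (u : Rn R n -> R) (g : Rn R n -> 'rV[R]_n) : Prop :=
  mu.-integrable Om (fun x => (u x)%:E) /\ weak_grad mu Om u g.

Definition L2 (R : realType) (n : nat)
  (mu : {measure set (Rn R n) -> \bar R}) (Om : set (Rn R n))
  (u : Rn R n -> R) : Prop :=
  measurable_fun Om u /\ (\int[mu]_(x in Om) ((u x) ^+ 2)%:E < +oo)%E.

Definition L2_cvg (R : realType) (n : nat)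
  (mu : {measure set (Rn R n) -> \bar R}) (Om : set (Rn R n))
  (us : nat -> Rn R n -> R) (u : Rn R n -> R) : Prop :=
  ((fun i => \int[mu]_(x in Om) ((us i x - u x) ^+ 2)%:E)%E @ \oo --> 0%E).

Definition modular (R : realType) (n : nat)
  (mu : {measure set (Rn R n) -> \bar R}) (Om : set (Rn R n))
  (phi : 'rV[R]_n -> R -> \bar R) (v : Rn R n -> 'rV[R]_n) : \bar R :=
  (\int[mu]_(x in Om) phi x (enorm (v x)))%E.

Definition lux_norm (R : realType) (n : nat)
  (mu : {measure set (Rn R n) -> \bar R}) (Om : set (Rn R n))
  (phi : 'rV[R]_n -> R -> \bar R) (v : Rn R n -> 'rV[R]_n) : \bar R :=
  ereal_inf [set lam%:E | lam in
    [set lam : R | 0 < lam /\ (modular mu Om phi (fun x => lam^-1 *: v x) <= 1)%E]].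

Definition weak_Phi (R : realType) (n : nat)
  (mu : {measure set (Rn R n) -> \bar R}) (Om : set (Rn R n))
  (phi : 'rV[R]_n -> R -> \bar R) : Prop :=
  (forall x t, Om x -> 0 <= t -> (0 <= phi x t)%E) /\
  (forall h : Rn R n -> R, measurable_fun Om h -> (forall y, Om y -> 0 <= h y) ->
     measurable_fun Om ((fun y => phi y (h y)) : Rn R n -> \bar R)) /\
  exists L : R, 1 <= L /\
  exists N : set (Rn R n), measurable N /\ mu N = 0%E /\
  forall x, Om x -> ~ N x ->
    [/\ (forall s t, 0 <= s -> s <= t -> (phi x s <= phi x t)%E),
        phi x 0 = 0%E,
        phi x t @[t --> 0^'+] --> 0%E,
        phi x t @[t --> +oo] --> +oo%E &
        (forall s t, 0 < s -> s <= t ->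
           ((s^-1)%:E * phi x s <= (L * t^-1)%:E * phi x t)%E)].

Definition phi_pow (R : realType) (n : nat) (phi : 'rV[R]_n -> R -> \bar R)
  (p : R) : 'rV[R]_n -> R -> \bar R :=
  fun x t => poweR (phi x t) p.

Definition L1psi_grad (R : realType) (n : nat)
  (mu : {measure set (Rn R n) -> \bar R}) (Om : set (Rn R n))
  (psi : 'rV[R]_n -> R -> \bar R) (u : Rn R n -> R) (g : Rn R n -> 'rV[R]_n) : Prop :=
  W11_grad mu Om u g /\ (lux_norm mu Om psi g < +oo)%E.

Definition L1psi (R : realType) (n : nat)
  (mu : {measure set (Rn R n) -> \bar R}) (Om : set (Rn R n))
  (psi : 'rV[R]_n -> R -> \bar R) (u : Rn R n -> R) : Prop :=
  exists g, L1psi_grad mu Om psi u g.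

(* E_psi(u) = int psi(x,|grad u|) + |u-f|^2 if u in L^{1,psi} cap L^2, +oo otherwise
   (the integral does not depend on the choice of the a.e.-determined weak
   gradient; the infimum over an empty set is +oo) *)
Definition Efun (R : realType) (n : nat)
  (mu : {measure set (Rn R n) -> \bar R}) (Om : set (Rn R n))
  (psi : 'rV[R]_n -> R -> \bar R) (f u : Rn R n -> R) : \bar R :=
  ereal_inf [set (\int[mu]_(x in Om) (psi x (enorm (g x)) + ((u x - f x) ^+ 2)%:E))%E
            | g in [set g | L1psi_grad mu Om psi u g /\ L2 mu Om u]].

Definition Fp (R : realType) (n : nat)
  (mu : {measure set (Rn R n) -> \bar R}) (Om : set (Rn R n))
  (phi : 'rV[R]_n -> R -> \bar R) (f : Rn R n -> R) (p : R) (u : Rn R n -> R) : \bar R :=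
  Efun mu Om (phi_pow phi p) f u.

Definition Frelax (R : realType) (n : nat)
  (mu : {measure set (Rn R n) -> \bar R}) (Om : set (Rn R n))
  (phi : 'rV[R]_n -> R -> \bar R) (f : Rn R n -> R) (u : Rn R n -> R) : \bar R :=
  ereal_inf [set limn_einf (fun i => Efun mu Om phi f (v i))
            | v in [set v : nat -> Rn R n -> R |
                     (forall i, L1psi mu Om phi (v i) /\ L2 mu Om (v i)) /\
                     L2_cvg mu Om v u]].

(* Main.v *)
Require Import Defs.
From HB Require Import structures.
From mathcomp Require Import all_boot all_order all_algebra.
From mathcomp Require Import all_classical all_reals all_analysis.
From mathcomp Require Import measurable_realfun.
Import Order.TTheory GRing.Theory Num.Theory.
Import numFieldNormedType.Exports.
Local Open Scope classical_set_scope.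
Local Open Scope ring_scope.
From mathcomp Require Import ring lra.
Lemma open_meas (R : realType) (n : nat) (A : set (Rn R n)) :
  open (A : set 'rV[R]_n) -> measurable A.
Proof. by move=> oA; apply: sub_sigma_algebra. Qed.
Lemma closed_meas (R : realType) (n : nat) (A : set (Rn R n)) :
  closed (A : set 'rV[R]_n) -> measurable A.
Proof. move=> cA. rewrite -[A]setCK; apply: measurableC; apply: open_meas.
exact: closed_openC. Qed.

Lemma cmxE (R : realType) n (a : R) (i : 'I_n) : (const_mx a : 'rV[R]_n) 0 i = a :> R.
Proof. by rewrite mxE. Qed.

Lemma fin_meas (R : realType) (n : nat)
  (mu : {measure set (Rn R n) -> \bar R}) (Om : set (Rn R n)) :
  open (Om : set 'rV[R]_n) -> lebesgue_rV mu -> bounded_set (Om : set 'rV[R]_n) -> (mu Om < +oo)%E.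
Proof.
move=> oOm leb [M [Mreal normAltM]].
pose B : set (Rn R n) := [set v : Rn R n | forall i, - (`|M| + 1) <= (v : 'rV[R]_n) 0 i <= (`|M| + 1)].
have cB : closed (B : set 'rV[R]_n).
  apply: compact_closed; first exact: norm_hausdorff.
  have := (@rV_compact _  _ (fun=> `[(- (`|M| + 1)), (`|M| + 1)]%classic)) (fun=> @segment_compact _ _ _).
  suff -> : B = [set v : 'rV[R]_n | forall i, v ord0 i \in `[(- (`|M| + 1)), (`|M| + 1)]] by [].
  by apply/seteqP; split=> v /= h i; have := h i; rewrite in_itv.
have sOB : Om `<=` B.
  move=> v /(normAltM (`|M| + 1)) normvleM i.
  have : `|M| < `|M| + 1 by rewrite ltrDl.
  move=> /(le_lt_trans (real_ler_norm Mreal)) /normvleM.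
  move=> h; suff : `|(v : 'rV[R]_n) ord0 i : R| <= `|M| + 1 by rewrite -ler_norml.
  apply: le_trans h.
  have /mapP[j Hj ->] : `|(v : 'rV[R]_n) ord0 i| \in [seq `|(v : 'rV[R]_n) x.1 x.2| | x : 'I_1 * 'I_n].
    by apply/mapP; exists (ord0, i) => //=; rewrite mem_enum.
  rewrite [leRHS]/Num.norm /= mx_normrE.
  by apply/bigmax_geP; right => /=; exists j.
suff muB : (mu B < +oo)%E.
  apply: le_lt_trans muB; apply: le_measure sOB.
  - by rewrite inE; exact: open_meas.
  - by rewrite inE; exact: closed_meas.
pose a : 'rV[R]_n := const_mx (- (`|M| + 1)).
pose b : 'rV[R]_n := const_mx (`|M| + 1).
have := leb a b.
have -> : [set x : Rn R n | forall i, a 0 i <= (x : 'rV[R]_n) 0 i <= b 0 i] = B.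
  rewrite /B /a /b; apply/seteqP; split => v /= h i; have := h i; by rewrite !cmxE.
move=> ->; first by rewrite ltry.
move=> i; rewrite !cmxE.
have h0 : 0 <= `|M| + 1 by rewrite addr_ge0.
by rewrite (le_trans _ h0) // oppr_le0.
Qed.
Lemma enorm_ge0 (R : realType) n (v : 'rV[R]_n) : 0 <= enorm v.
Proof. exact: sqrtr_ge0. Qed.

Lemma enormZ (R : realType) n (k : R) (v : 'rV[R]_n) : enorm (k *: v) = `|k| * enorm v.
Proof.
rewrite /enorm (eq_bigr (fun j => k ^+ 2 * v 0 j ^+ 2)); last first.
  by move=> j _; rewrite mxE exprMn.
by rewrite -mulr_sumr sqrtrM ?sqr_ge0 // sqrtr_sqr.
Qed.

Lemma meas_enorm (R : realType) n (D : set (Rn R n)) (g : Rn R n -> 'rV[R]_n) :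
  (forall j, measurable_fun D (fun x => g x 0 j)) ->
  measurable_fun D (fun x => enorm (g x)).
Proof.
move=> mg; rewrite /enorm.
apply: (measurableT_comp (continuous_measurable_fun (@sqrt_continuous R))).
by apply: measurable_sum => j; apply: measurable_funX.
Qed.
Lemma phi_scale (R : realType) (ph : R -> \bar R) (L K t : R) :
  ph 0 = 0%E ->
  (forall s t, 0 < s -> s <= t -> ((s^-1)%:E * ph s <= (L * t^-1)%:E * ph t)%E) ->
  0 <= t -> 1 <= K ->
  (ph (K^-1 * t)%R <= (L / K)%:E * ph t)%E.
Proof.
move=> ph0 H t0 K1; have K0 : 0 < K by rewrite (lt_le_trans ltr01).
have [->|tn0] := eqVneq t 0; first by rewrite mulr0 ph0 mule0.
have tpos : 0 < t by rewrite lt_neqAle eq_sym tn0.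
have spos : 0 < K^-1 * t by rewrite mulr_gt0 // invr_gt0.
have st : K^-1 * t <= t by rewrite ler_pdivrMl // ler_peMl // ltW.
have := H _ _ spos st; rewrite lee_pdivrMl // muleA -EFinM.
suff -> : K^-1 * t * (L * t^-1) = L / K by [].
by field; rewrite (lt0r_neq0 tpos) (lt0r_neq0 K0).
Qed.

Lemma pt_real (R : realType) (r q : R) : 0 <= r -> 1 < q -> r <= r `^ q + (q - 1).
Proof.
move=> r0 q1; have q0 : 0 <= q - 1 by rewrite subr_ge0 ltW.
have [r1|r1] := leP 1 r.
  by rewrite (le_trans (le1r_powR r1 (ltW q1))) // lerDl.
have [->|rpos] := eqVneq r 0; first by rewrite addr_ge0 // powR_ge0.
have rgt0 : 0 < r by rewrite lt_neqAle eq_sym rpos.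
rewrite -(mulr_powRB1 (ltW rgt0) (lt_trans ltr01 q1)).
have e : r `^ (q - 1) = expR ((q - 1) * ln r) by rewrite /powR (negbTE rpos).
have h1 := expR_ge1Dx ((q - 1) * ln r).
have h2 : - ln r <= r^-1.
  by rewrite -lnV ?posrE // ltW // ln_sublinear // invr_gt0.
rewrite e -lerBlDl.
have : r - r * expR ((q - 1) * ln r) <= r * (- ((q - 1) * ln r)).
  by rewrite -[X in X - _]mulr1 -mulrBr ler_wpM2l ?(ltW rgt0) // lerBlDr -lerBlDl opprK.
move/le_trans; apply.
have -> : r * - ((q - 1) * ln r) = (q - 1) * (r * - ln r) by rewrite !mulrN mulrCA.
rewrite -[leRHS]mulr1 ler_wpM2l //.
by rewrite -(mulfV (lt0r_neq0 rgt0)) ler_wpM2l ?(ltW rgt0).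
Qed.
Lemma pt_ext (R : realType) (a : \bar R) (q : R) : (0 <= a)%E -> 1 < q ->
  (a <= poweR a q + (q - 1)%:E)%E.
Proof.
move=> a0 q1; case: a a0 => [r| |] //= r0.
  by rewrite -EFinD lee_fin pt_real.
by rewrite gt_eqF ?(lt_trans ltr01 q1) // addye.
Qed.
Lemma int_pow_le (R : realType) n (mu : {measure set (Rn R n) -> \bar R}) (Om : set (Rn R n))
  (h : Rn R n -> \bar R) (q : R) : measurable Om -> 1 < q ->
  measurable_fun Om h -> (forall x, Om x -> (0 <= h x)%E) ->
  (\int[mu]_(x in Om) h x <= \int[mu]_(x in Om) poweR (h x) q + (q - 1)%:E * mu Om)%E.
Proof.
move=> mOm q1 mh h0.
have q0 : 0 <= q - 1 by rewrite subr_ge0 ltW.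
have mp : measurable_fun Om (fun x => poweR (h x) q).
  exact: (measurableT_comp (measurable_poweR q) mh).
rewrite -(integral_cst mu mOm) -ge0_integralD //; cycle 1.
all: try (by move=> x _; exact: poweR_ge0).
all: try (by move=> x _; rewrite lee_fin).
all: try exact: measurable_cst.
apply: ge0_le_integral => //.
- by apply: emeasurable_funD => //; exact: measurable_cst.
- by move=> x Ox; apply: (pt_ext _ _ _ (h0 x Ox) q1).
Qed.
Lemma lux_fin (R : realType) n (mu : {measure set (Rn R n) -> \bar R}) (Om : set (Rn R n))
  (phi : 'rV[R]_n -> R -> \bar R) (g : Rn R n -> 'rV[R]_n) (q : R) :
  measurable Om -> (mu Om < +oo)%E -> weak_Phi mu Om phi -> 1 < q ->
  (forall j, measurable_fun Om (fun x => g x 0 j)) ->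
  (lux_norm mu Om (phi_pow phi q) g < +oo)%E -> (lux_norm mu Om phi g < +oo)%E.
Proof.
move=> mOm finOm [P0 [Pm [L [L1 [N [mN [N0 PN]]]]]]] q1 mg.
move=> /ereal_inf_lt[_ [lam0 [lam0pos Hmod] <-] _].
have Om0 : (0 <= mu Om)%E by exact: measure_ge0.
set c := fine (mu Om).
have muc : mu Om = c%:E by rewrite fineK // ge0_fin_numE.
have c0 : 0 <= c by rewrite -lee_fin -muc.
have q0 : 0 <= q - 1 by rewrite subr_ge0 ltW.
have L0 : 0 <= L := le_trans ler01 L1.
set K := Num.max 1 (L * (1 + (q - 1) * c)).
have K1 : 1 <= K by rewrite le_max lexx.
have K0 : 0 < K by rewrite (lt_le_trans ltr01).
have LK : L * (1 + (q - 1) * c) <= K by rewrite le_max lexx orbT.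
set E := fun x => enorm (g x).
have E0 x : 0 <= E x by exact: enorm_ge0.
have mE : measurable_fun Om E by exact: meas_enorm.
have e0 x : enorm (lam0^-1 *: g x) = lam0^-1 * E x.
  by rewrite enormZ ger0_norm // invr_ge0 ltW.
have e1 x : enorm ((lam0 * K)^-1 *: g x) = K^-1 * (lam0^-1 * E x).
  rewrite enormZ ger0_norm; last by rewrite invr_ge0 mulr_ge0 // ltW.
  by rewrite invfM mulrA [K^-1 * _]mulrC.
have h0ge x : 0 <= lam0^-1 * E x by rewrite mulr_ge0 // invr_ge0 ltW.
have mh0 : measurable_fun Om (fun x => lam0^-1 * E x).
  by apply: measurable_funM => //; exact: measurable_cst.
have mh1 : measurable_fun Om (fun x => K^-1 * (lam0^-1 * E x)).
  by apply: measurable_funM => //; exact: measurable_cst.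
have h1ge x : 0 <= K^-1 * (lam0^-1 * E x) by rewrite mulr_ge0 // invr_ge0 ltW.
apply: (@le_lt_trans _ _ ((lam0 * K)%:E)); last exact: ltry.
apply: ereal_inf_lbound; exists (lam0 * K) => //; split; first by rewrite mulr_gt0.
rewrite /modular.
under eq_integral => x _ do rewrite e1.
have mp1 : measurable_fun Om (fun x => phi x (K^-1 * (lam0^-1 * E x))).
  by apply: Pm => // y _.
have mp0 : measurable_fun Om (fun x => phi x (lam0^-1 * E x)).
  by apply: Pm => // y _.
have H1 : (\int[mu]_(x in Om) phi x (K^-1 * (lam0^-1 * E x))%R <= \int[mu]_(x in Om) ((L / K)%R%:E * phi x (lam0^-1 * E x)%R))%E.
  apply: ae_ge0_le_integral => //.
  - by move=> x Ox; apply: P0.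
  - by move=> x Ox; rewrite mule_ge0 // ?lee_fin ?divr_ge0 ?(ltW K0) //; apply: P0.
  - by apply: emeasurable_funM => //; exact: measurable_cst.
  - exists N; split => // x /= H; apply: contrapT => Nx; apply: H => Ox.
    have [_ ph0 _ _ Hinc] := PN x Ox Nx.
    exact: phi_scale.
apply: le_trans H1 _.
rewrite ge0_integralZl_EFin //; last 2 first.
  - by move=> x Ox; apply: P0.
  - by rewrite divr_ge0 // ltW.
have := int_pow_le _ _ mu Om _ q mOm q1 mp0 (fun x Ox => P0 x _ Ox (h0ge x)).
have Hmod' : (\int[mu]_(x in Om) poweR (phi x (lam0^-1 * E x)%R) q <= 1)%E.
  move: Hmod; rewrite /modular /phi_pow.
  by rewrite (eq_integral (fun x : Rn R n => poweR (phi x (lam0^-1 * E x)%R) q)) // => x _; rewrite e0.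
move=> H.
have H2 : ((L / K)%R%:E * \int[mu]_(x in Om) phi x (lam0^-1 * E x)%R <= (L / K)%R%:E * (1 + (q - 1)%:E * mu Om))%E.
  apply: lee_wpmul2l; first by rewrite lee_fin divr_ge0 // ltW.
  apply: le_trans H _; exact: leeD2r Hmod'.
apply: le_trans H2 _.
rewrite muc -EFinM lee_fin.
by rewrite mulrAC ler_pdivrMr // mul1r.
Qed.
Lemma grad_meas (R : realType) n (mu : {measure set (Rn R n) -> \bar R}) (Om : set (Rn R n))
  v (g : Rn R n -> 'rV[R]_n) : W11_grad mu Om v g -> forall j, measurable_fun Om (fun x => g x 0 j).
Proof.
move=> [_ [H _]] j; apply/measurable_EFinP; exact: (measurable_int mu (H j)).
Qed.

Lemma Efun_le (R : realType) n (mu : {measure set (Rn R n) -> \bar R}) (Om : set (Rn R n))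
  (phi : 'rV[R]_n -> R -> \bar R) (f v : Rn R n -> R) (q : R) :
  measurable Om -> (mu Om < +oo)%E -> weak_Phi mu Om phi -> L2 mu Om f -> 1 < q ->
  (Efun mu Om phi f v <= Efun mu Om (phi_pow phi q) f v + (q - 1)%:E * mu Om)%E
  /\ ((Efun mu Om (phi_pow phi q) f v < +oo)%E -> L1psi mu Om phi v /\ L2 mu Om v).
Proof.
move=> mOm finOm wP mf q1.
have wP' := wP; move: wP' => [P0 [Pm _]].
have Om0 : (0 <= mu Om)%E by exact: measure_ge0.
have q0 : 0 <= q - 1 by rewrite subr_ge0 ltW.
have cfin : ((q - 1)%:E * mu Om)%E \is a fin_num.
  by rewrite fin_numM // ge0_fin_numE.
have memb g : L1psi_grad mu Om (phi_pow phi q) v g /\ L2 mu Om v ->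
    L1psi_grad mu Om phi v g /\
    (\int[mu]_(x in Om) (phi x (enorm (g x)) + ((v x - f x) ^+ 2)%:E) <=
     \int[mu]_(x in Om) (phi_pow phi q x (enorm (g x)) + ((v x - f x) ^+ 2)%:E)
       + (q - 1)%:E * mu Om)%E.
  move=> [[W lux] L2v].
  have mg := grad_meas _ _ _ _ _ _ W.
  split; first by split => //; exact: (lux_fin _ _ _ _ _ _ _ mOm finOm wP q1 mg lux).
  have mE : measurable_fun Om (fun x => enorm (g x)) by exact: meas_enorm.
  have mp : measurable_fun Om (fun x => phi x (enorm (g x))).
    by apply: Pm => // y _; exact: enorm_ge0.
  have mpq : measurable_fun Om (fun x => phi_pow phi q x (enorm (g x))).
    exact: (measurableT_comp (measurable_poweR q) mp).
  have msq : measurable_fun Om (fun x => ((v x - f x) ^+ 2)%:E).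
    apply/measurable_EFinP; apply: measurable_funX; apply: measurable_funB.
    - exact: L2v.1.
    - exact: mf.1.
  have p0 x : Om x -> (0 <= phi x (enorm (g x)))%E.
    by move=> Ox; apply: P0 => //; exact: enorm_ge0.
  have sq0 x : Om x -> (0 <= ((v x - f x) ^+ 2)%:E)%E.
    by move=> _; rewrite lee_fin sqr_ge0.
  rewrite ge0_integralD // ge0_integralD //; last by move=> x _; exact: poweR_ge0.
  rewrite addeAC; apply: leeD2r.
  exact: int_pow_le _ _ mu Om _ q mOm q1 mp p0.
split.
  rewrite -leeBlDr //; apply: le_ereal_inf_tmp => _ [g Sg <-].
  rewrite leeBlDr //; have [Sg' H] := memb g Sg.
  apply: le_trans H; apply: ereal_inf_lbound; exists g => //; split => //; exact: Sg.2.
move=> /ereal_inf_lt[_ [g Sg _] _]; have [Sg' _] := memb g Sg.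
split; [by exists g | exact: Sg.2].
Qed.
Section aux.
Local Open Scope ereal_scope.
Lemma limn_einf_le (R : realType) (u w : nat -> \bar R) :
  (forall i, u i <= w i) -> limn_einf u <= limn_einf w.
Proof.
move=> uw; rewrite !limn_einf_lim; apply: lee_lim; [exact: is_cvg_einfs|exact: is_cvg_einfs|].
apply: nearW => i; apply: le_ereal_inf_tmp => _ [k /= ik <-].
apply: le_trans (uw k); apply: ereal_inf_lbound; by exists k.
Qed.

Lemma einfs_le_limn (R : realType) (u : nat -> \bar R) i : einfs u i <= limn_einf u.
Proof.
rewrite limn_einf_lim; apply: lime_ge; first exact: is_cvg_einfs.
near=> k; apply: nondecreasing_einfs; near: k; exact: nbhs_infty_ge.
Unshelve. all: by end_near. Qed.

Lemma limn_einf_ge0 (R : realType) (u : nat -> \bar R) :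
  (forall i, 0 <= u i) -> 0 <= limn_einf u.
Proof.
move=> u0; apply: (le_trans _ (einfs_le_limn _ u 0%N)).
by apply: le_ereal_inf_tmp => _ [k _ <-].
Qed.
End aux.
Theorem mainTheorem12 (R : realType) (n : nat)
  (mu : {measure set (Rn R n) -> \bar R}) (Om : set (Rn R n))
  (phi : 'rV[R]_n -> R -> \bar R) (f u : Rn R n -> R)
  (us : nat -> Rn R n -> R) (p : nat -> R) :
  (0 < n)%N -> lebesgue_rV mu ->
  open (Om : set 'rV[R]_n) -> connected (Om : set 'rV[R]_n) ->
  bounded_set (Om : set 'rV[R]_n) ->
  weak_Phi mu Om phi -> L2 mu Om f ->
  L2 mu Om u -> (forall i, L2 mu Om (us i)) -> L2_cvg mu Om us u ->
  (forall i, 1 < p i) -> p @ \oo --> (1 : R) ->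
  (Frelax mu Om phi f u <= limn_einf (fun i => Fp mu Om phi f (p i) (us i)))%E.
Proof.
move=> n0 leb oOm _ bOm wP mf Lu Lus cvgu p1 pcvg.
have mOm : measurable Om := open_meas _ _ _ oOm.
have finOm := fin_meas _ _ mu Om oOm leb bOm.
have Om0 : (0 <= mu Om)%E by exact: measure_ge0.
set c := fine (mu Om).
have muc : mu Om = c%:E by rewrite fineK // ge0_fin_numE.
have c0 : 0 <= c by rewrite -lee_fin -muc.
set a := fun i => Fp mu Om phi f (p i) (us i).
have Efun_ge0 psi w : (forall x t, Om x -> 0 <= t -> (0 <= psi x t)%E) ->
    (0 <= Efun mu Om psi f w)%E.
  move=> psi0; apply: le_ereal_inf_tmp => _ [g _ <-]; apply: integral_ge0 => x Ox.
  by rewrite adde_ge0 ?lee_fin ?sqr_ge0 // psi0 // enorm_ge0.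
have a0 i : (0 <= a i)%E by apply: Efun_ge0 => x t _ _; exact: poweR_ge0.
set l := limn_einf a.
have l0 : (0 <= l)%E by exact: limn_einf_ge0.
have [->|lpoo] := eqVneq l +oo%E; first exact: leey.
have lfin : l \is a fin_num by rewrite ge0_fin_numE // lt_neqAle lpoo leey.
have hex i : exists j, (i <= j)%N /\ (a j < l + (harmonic i)%:E)%E.
  have : (einfs a i < l + (harmonic i)%:E)%E.
    apply: le_lt_trans (einfs_le_limn _ a i) _.
    by rewrite lteDl // lte_fin harmonic_gt0.
  by move=> /ereal_inf_lt[_ [j /= ij <-] H]; exists j.
have [sig Hsig] := choice hex.
set v := fun i => us (sig i).
have sigoo : sig @ \oo --> \oo.
  apply/cvgnyPge => A; near=> i; apply: leq_trans (Hsig i).1; near: i; exact: nbhs_infty_ge.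
have afin i : (a (sig i) < +oo)%E.
  apply: lt_trans (Hsig i).2 _; by rewrite -(fineK lfin) -EFinD ltry.
have key i := Efun_le _ _ mu Om phi f (us (sig i)) (p (sig i)) mOm finOm wP mf (p1 (sig i)).
have memv i : L1psi mu Om phi (v i) /\ L2 mu Om (v i) := (key i).2 (afin i).
apply: (@le_trans _ _ (limn_einf (fun i => Efun mu Om phi f (v i)))).
  apply: ereal_inf_lbound; exists v => //; split => //.
  exact: (cvg_comp _ _ sigoo cvgu).
set r := fun i => (l + ((harmonic i) + (p (sig i) - 1) * c)%:E)%E.
have bler i : (Efun mu Om phi f (v i) <= r i)%E.
  apply: le_trans (key i).1 _.
  rewrite /r muc -EFinM EFinD addeA; apply: leeD2r; exact: ltW (Hsig i).2.
apply: le_trans (limn_einf_le _ _ _ bler) _.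
have rcvg : r @ \oo --> l.
  rewrite /r; have {2}-> : l = (l + 0%:E)%E by rewrite adde0.
  apply: cvgeD; [by rewrite fin_num_adde_defl | exact: cvg_cst |].
  apply: cvg_EFin; first exact: nearW.
  have -> : (0 : R) = 0 + (1 - 1) * c by rewrite subrr mul0r addr0.
  apply: cvgD; first exact: cvg_harmonic.
  apply: cvgMl; apply: cvgB; last exact: cvg_cst.
  exact: (cvg_comp _ _ sigoo pcvg).
by rewrite (cvg_limn_einf_sup rcvg).1.
Unshelve. all: by end_near. Qed.
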